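(* Let $V$ be a real vector space and let $C$ be a convex cone in $V$ with $0\in C$. Suppose $Y$ is a $C$-antichain-convex subset of $V$. Then: (1) for each $y\in\operatorname{co}(Y)$ there exists $z\in Y$ such that $z\in y+C$ (i.e., $y$ is $C$-Pareto dominated by some element of $Y$); (2) for each $y\in\operatorname{co}(Y)$ there exists $x\in Y$ such that $y\in x+C$ (i.e., $y$ $C$-Pareto dominates some element of $Y$).
   Context: A cone in a real vector space $V$ is a subset $C$ with $\lambda C\subseteq C$ for all $\lambda>0$ (it may be empty and need not contain $0$). A subset $S\subseteq V$ is $C$-antichain-convex iff for all $x,y\in S$ and $\lambda\in[0,1]$ with $y-x\notin C\cup(-C)$ one has $\lambda x+(1-\lambda)y\in S$. An element $v\in V$ is $C$-Pareto dominated by $z\in V$ iff $z\in v+C$. $\operatorname{co}$ denotes the convex hull. *)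

(* Defs.v *)
From HB Require Import structures.
From mathcomp Require Import all_boot all_order all_algebra.
From mathcomp Require Import reals.
Set Implicit Arguments. Unset Strict Implicit. Unset Printing Implicit Defensive.
Import Order.TTheory GRing.Theory Num.Theory.
Local Open Scope ring_scope.

Section Defs.
Context {R : realType} {V : lmodType R}.

Definition is_cone (C : V -> Prop) : Prop :=
  forall (l : R) (x : V), 0 < l -> C x -> C (l *: x).

Definition is_convex (S : V -> Prop) : Prop :=
  forall (x y : V) (l : R), S x -> S y -> 0 <= l -> l <= 1 ->
    S (l *: x + (1 - l) *: y).

Definition antichain_convex (C S : V -> Prop) : Prop :=
  forall (x y : V) (l : R), S x -> S y -> 0 <= l -> l <= 1 ->
    ~ (C (y - x) \/ C (- (y - x))) ->
    S (l *: x + (1 - l) *: y).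

Definition conv_hull (S : V -> Prop) : V -> Prop :=
  fun y => exists (n : nat) (w : 'I_n -> R) (x : 'I_n -> V),
    (forall i, 0 <= w i) /\ \sum_(i < n) w i = 1 /\
    (forall i, S (x i)) /\ y = \sum_(i < n) w i *: x i.

End Defs.

(* Main.v *)
Require Import Defs.
From HB Require Import structures.
From mathcomp Require Import all_boot all_order all_algebra.
From mathcomp Require Import reals.
From mathcomp Require Import ring.
From Stdlib Require Import Classical.
Import Order.TTheory GRing.Theory Num.Theory.
Local Open Scope ring_scope.

Section Aux.
Variables (R : realType) (V : lmodType R) (C Y : V -> Prop).
Hypotheses (Hc : is_cone C) (Hcv : is_convex C) (H0 : C 0)
  (HY : antichain_convex C Y).

Lemma Cscale l x : 0 <= l -> C x -> C (l *: x).
Proof.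
move=> l0 Cx; case: (ltrP 0 l) => hl; first exact: Hc.
have -> : l = 0 by apply/eqP; rewrite eq_le hl l0.
by rewrite scale0r.
Qed.

Lemma Cadd a b : C a -> C b -> C (a + b).
Proof.
move=> Ca Cb.
have h := Hcv _ _ 2^-1 Ca Cb.
have h1 : 0 <= (2:R)^-1 by rewrite invr_ge0.
have h2 : (2:R)^-1 <= 1 by rewrite invf_le1 // ler1n.
have := Hc _ _ (ltr0Sn R 1) (h h1 h2).
have -> : (1 - (2:R)^-1) = 2^-1 by field.
by rewrite -scalerDr scalerA mulfV ?pnatr_eq0 // scale1r.
Qed.

Lemma dom n : forall (w : 'I_n -> R) (x : 'I_n -> V),
  (forall i, 0 <= w i) -> (forall i, Y (x i)) -> 0 < \sum_(i < n) w i ->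
  exists z, Y z /\ C ((\sum_(i < n) w i) *: z - \sum_(i < n) w i *: x i).
Proof.
elim: n => [|n IH] w x w0 Yx.
  by rewrite big_ord0 ltxx.
rewrite !big_ord_recr /=.
set s' := \sum_(i < n) w (widen_ord (leqnSn n) i).
set t' := \sum_(i < n) w (widen_ord (leqnSn n) i) *: x (widen_ord (leqnSn n) i).
set wn := w ord_max; set xn := x ord_max.
have s'0 : 0 <= s' by apply: sumr_ge0 => i _; apply: w0.
have wn0 : 0 <= wn by apply: w0.
move=> spos.
case: (ltrP 0 s') => hs'; last first.
  have e : s' = 0 by apply: le_anti; rewrite hs' s'0.
  have t0 : t' = 0.
    rewrite /t' big1 // => i _.
    move/eqP: e; rewrite /s' psumr_eq0; last by move=> j _.
    by move/allP/(_ i (mem_index_enum _))/implyP/(_ isT)/eqP => ->; rewrite scale0r.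
  exists xn; split; first exact: Yx.
  rewrite e t0 add0r add0r subrr //.
have [z' [Yz' Cz']] := IH (fun i => w (widen_ord (leqnSn n) i))
   (fun i => x (widen_ord (leqnSn n) i)) (fun i => w0 _) (fun i => Yx _) hs'.
fold s' t' in Cz'.
set u := s' *: z' + wn *: xn.
have Cu : forall v, C (v - u) -> C (v - (t' + wn *: xn)).
  move=> v Cv.
  have -> : v - (t' + wn *: xn) = (v - u) + (s' *: z' - t').
    by rewrite /u !opprD -addrA addrACA addNr add0r [- _ - t']addrC.
  exact: Cadd.
have sne : s' + wn != 0 by rewrite gt_eqF.
case: (classic (C (z' - xn))) => [h|h1].
  exists z'; split => //; apply: Cu.
  have -> : (s' + wn) *: z' - u = wn *: (z' - xn).
    by rewrite /u scalerDl scalerBr [s' *: z' + wn *: z']addrC addrKA.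
  exact: Cscale.
case: (classic (C (- (z' - xn)))) => [h|h2].
  exists xn; split; first exact: Yx.
  apply: Cu.
  have -> : (s' + wn) *: xn - u = s' *: (- (z' - xn)).
    by rewrite /u scalerDl opprB scalerBr [s' *: z' + _]addrC addrKA.
  by apply: Cscale => //; apply: ltW.
set l := s' / (s' + wn).
have l0 : 0 <= l by rewrite divr_ge0 // ltW.
have l1 : l <= 1 by rewrite ler_pdivrMr // mul1r lerDl.
have Yz : Y (l *: z' + (1 - l) *: xn).
  apply: (HY _ _ _ Yz' (Yx ord_max) l0 l1) => -[a|b].
    by apply: h2; rewrite opprB.
  by apply: h1; rewrite opprB in b.
exists (l *: z' + (1 - l) *: xn); split => //; apply: Cu.
have -> : (s' + wn) *: (l *: z' + (1 - l) *: xn) = u.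
  rewrite scalerDr !scalerA /l /u; congr (_ *: _ + _ *: _); field => //.
by rewrite subrr.
Qed.
End Aux.

Lemma negC (R : realType) (V : lmodType R) (C Y : V -> Prop) :
  is_cone C -> is_convex C -> C 0 -> antichain_convex C Y ->
  is_cone (fun v => C (- v)) /\ is_convex (fun v => C (- v)) /\
  C (- 0) /\ antichain_convex (fun v => C (- v)) Y.
Proof.
move=> Hc Hcv H0 HY; split; last split; last split.
- by move=> l v l0 Cv; rewrite -scalerN; apply: Hc.
- by move=> a b l Ca Cb l0 l1; rewrite opprD -!scalerN; apply: Hcv.
- by rewrite oppr0.
- move=> a b l Ya Yb l0 l1 nc; apply: HY => // -[h|h]; apply: nc.
    by right; rewrite opprK.
  by left.
Qed.

Theorem lemma5 (R : realType) (V : lmodType R) (C Y : V -> Prop) :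
  is_cone C -> is_convex C -> C 0 -> antichain_convex C Y ->
  (forall y, conv_hull Y y -> exists z, Y z /\ C (z - y)) /\
  (forall y, conv_hull Y y -> exists x, Y x /\ C (y - x)).
Proof.
move=> Hc Hcv H0 HY.
have gen : forall C', is_cone C' -> is_convex C' -> C' 0 -> antichain_convex C' Y ->
  forall y, conv_hull Y y -> exists z, Y z /\ C' (z - y).
  move=> C' Hc' Hcv' H0' HY' y [n [w [x [w0 [w1 [Yx ->]]]]]].
  have pos : 0 < \sum_(i < n) w i by rewrite w1 ltr01.
  have [z [Yz Cz]] := @dom _ _ C' Y Hc' Hcv' H0' HY' n w x w0 Yx pos.
  by exists z; rewrite w1 scale1r in Cz.
split; first exact: gen.
move=> y hy.
have [c1 [c2 [c3 c4]]] := @negC _ _ C Y Hc Hcv H0 HY.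
have [z [Yz Cz]] := gen (fun v => C (- v)) c1 c2 c3 c4 y hy.
exists z; split; first exact: Yz.
by rewrite -(opprK (y - z)) opprB.
Qed.
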